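(* Let $\varepsilon\in(0,1)$, $4\pi/5<a<\pi$ and $t_0>2\pi$. Then there exists $v\in(0,1)$ such that $T_0(Q,\Omega)<\infty$, where $Q=\{(t,x): t\ge0,\ x\in\omega(t)\}$ with $\omega(t)=\{(r,\theta):1-\varepsilon<r\le1,\ \theta_0(t)<\theta<a+\theta_0(t)\}$, $\theta_0(t)=0$ for $0\le t<t_0$ and $\theta_0(t)=v(t-t_0)$ for $t\ge t_0$.
   Context: $\Omega=\{(x,y)\in\mathbb{R}^2:x^2+y^2<1\}$ is the Euclidean unit disk, with polar coordinates $(r,\theta)$ (angles mod $2\pi$; wave equation with Dirichlet boundary condition). Rays (projections of generalized bicharacteristics, parametrized by time) are the curves $t\mapsto x(t)\in\overline\Omega$, $t\in\mathbb{R}$: unit-speed billiard trajectories (straight segments at unit speed reflecting specularly at the unit circle) and unit-speed motions along the unit circle in either direction (gliding rays). $(Q,T)$ satisfies the time-dependent geometric control condition if every ray admits $t\in(0,T)$ with $(t,x(t))\in Q$; $T_0(Q,\Omega)$ is the infimum of such $T>0$, $+\infty$ if none. *)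

(* Defs.v *)
From Stdlib Require Import Reals ZArith.
Open Scope R_scope.

Definition pt := (R * R)%type.

Definition dot (u w : pt) : R := fst u * fst w + snd u * snd w.

(* specular reflection of the velocity u at the boundary point n (|n| = 1,
   n is the unit normal of the unit circle at n) *)
Definition reflect_vel (u n : pt) : pt :=
  (fst u - 2 * dot u n * fst n, snd u - 2 * dot u n * snd n).

Definition billiard_ray (x : R -> pt) : Prop :=
  exists (tau : Z -> R) (vel : Z -> pt),
    (forall k, tau k < tau (k + 1)%Z) /\
    (forall M, exists k, M < tau k) /\
    (forall M, exists k, tau k < M) /\
    (forall t, dot (x t) (x t) <= 1) /\
    (forall k, dot (x (tau k)) (x (tau k)) = 1) /\
    (forall k, dot (vel k) (vel k) = 1) /\
    (forall k t, tau k <= t <= tau (k + 1)%Z ->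
       x t = (fst (x (tau k)) + (t - tau k) * fst (vel k),
              snd (x (tau k)) + (t - tau k) * snd (vel k))) /\
    (forall k, vel (k + 1)%Z = reflect_vel (vel k) (x (tau (k + 1)%Z))).

Definition gliding_ray (x : R -> pt) : Prop :=
  exists (th1 s : R), (s = 1 \/ s = -1) /\
    forall t, x t = (cos (th1 + s * t), sin (th1 + s * t)).

Definition ray (x : R -> pt) : Prop := billiard_ray x \/ gliding_ray x.

Definition GCC (Q : R -> pt -> Prop) (T : R) : Prop :=
  forall x, ray x -> exists t, 0 < t < T /\ Q t (x t).

(* T_0(Q, Omega) < +oo : the set of T > 0 with GCC is nonempty. *)
Definition T0_finite (Q : R -> pt -> Prop) : Prop :=
  exists T, 0 < T /\ GCC Q T.

Definition theta0 (v t0 t : R) : R :=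
  if Rlt_dec t t0 then 0 else v * (t - t0).

Definition in_omega (eps a th0 : R) (p : pt) : Prop :=
  exists r th, 1 - eps < r <= 1 /\ th0 < th < a + th0 /\
    p = (r * cos th, r * sin th).

Definition Qset (eps a t0 v : R) (t : R) (p : pt) : Prop :=
  0 <= t /\ in_omega eps a (theta0 v t0 t) p.

(* Main.v *)
Require Import Defs.
From Stdlib Require Import Reals Lra Lia ZArith.
Open Scope R_scope.

Lemma PI_lt_35 : PI < 7/2.
Proof.
  pose proof (PI_ineq 1) as [_ H]. simpl in H. unfold tg_alt, PI_tg in H. simpl in H. lra.
Qed.

Lemma PI_gt_3 : 3 < PI.
Proof. pose proof PI2_3_2. lra. Qed.

Lemma cos_sin_Z x (m : Z) :
  cos (x + 2 * PI * IZR m) = cos x /\ sin (x + 2 * PI * IZR m) = sin x.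
Proof.
  destruct m as [|p|p].
  - simpl. replace (x + 2 * PI * 0) with x by ring. auto.
  - rewrite <- (positive_nat_Z p), <- INR_IZR_INZ.
    replace (x + 2 * PI * INR (Pos.to_nat p)) with (x + 2 * INR (Pos.to_nat p) * PI) by ring.
    rewrite cos_period, sin_period. auto.
  - rewrite <- Pos2Z.opp_pos, opp_IZR, <- (positive_nat_Z p), <- INR_IZR_INZ.
    set (y := x + 2 * PI * - INR (Pos.to_nat p)).
    replace x with (y + 2 * INR (Pos.to_nat p) * PI) by (unfold y; ring).
    rewrite cos_period, sin_period. auto.
Qed.

Lemma pos_rep y : exists m : Z, 0 < y + 2 * PI * IZR m <= 2 * PI.
Proof.
  pose proof PI_RGT_0.
  exists (up (- y / (2 * PI))).
  destruct (archimed (- y / (2 * PI))) as [H1 H2].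
  set (U := IZR (up (- y / (2 * PI)))) in *.
  assert (E : - y = 2 * PI * (- y / (2 * PI))) by (field; lra).
  set (w := - y / (2 * PI)) in *.
  split; nra.
Qed.

Lemma INR_to_nat z : (0 < z)%Z -> INR (Z.to_nat z) = IZR z.
Proof. intro H. rewrite INR_IZR_INZ, Z2Nat.id by lia. reflexivity. Qed.

Lemma walk_pos (a psi s : R) : 0 < s < a ->
  exists (j : nat) (m : Z), INR j * s <= 2 * PI + s /\
    0 < psi + INR j * s + 2 * PI * IZR m < a.
Proof.
  intros [Hs Hsa]. pose proof PI_RGT_0.
  destruct (pos_rep psi) as [m Hm].
  set (u := psi + 2 * PI * IZR m - 2 * PI) in *.
  assert (Hu : - 2 * PI < u <= 0) by (unfold u; lra).
  set (q := - u / s).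
  assert (Hq : 0 <= q) by (unfold q; apply Rmult_le_pos; [lra| left; apply Rinv_0_lt_compat; lra]).
  destruct (archimed q) as [H1 H2].
  assert (Hup : (0 < up q)%Z) by (apply lt_IZR; simpl; lra).
  exists (Z.to_nat (up q)), (m - 1)%Z.
  rewrite INR_to_nat by exact Hup. rewrite minus_IZR.
  assert (E : - u = q * s) by (unfold q; field; lra).
  set (U := IZR (up q)) in *.
  assert (A1 : U * s <= q * s + s) by nra.
  assert (A2 : q * s < U * s) by nra.
  unfold u in *. split; [lra|]. split; lra.
Qed.

Lemma walk_neg (a psi s : R) : - a < s < 0 ->
  exists (j : nat) (m : Z), INR j * (- s) <= 2 * PI - s /\
    0 < psi + INR j * s + 2 * PI * IZR m < a.
Proof.
  intros Hs. destruct (walk_pos a (a - psi) (- s)) as (j & m & H1 & H2); [lra|].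
  exists j, (- m)%Z. rewrite opp_IZR. split; [lra|]. lra.
Qed.

Lemma three_pt (a psi d : R) : 2 * PI / 3 < a -> a < PI ->
  2 * PI - a < d < PI + a / 2 ->
  exists (i : nat) (m : Z), (i <= 2)%nat /\ 0 < psi + INR i * d + 2 * PI * IZR m < a.
Proof.
  intros Ha1 Ha2 Hd. pose proof PI_RGT_0.
  destruct (pos_rep psi) as [m Hm].
  set (u := psi + 2 * PI * IZR m) in *.
  destruct (Rlt_dec u a) as [H1|H1].
  - exists 0%nat, m. split; [lia|]. simpl. unfold u in *. lra.
  - destruct (Rlt_dec (u - PI + (d - PI)) a) as [H2|H2].
    + exists 1%nat, (m - 1)%Z. split; [lia|]. rewrite minus_IZR. simpl. unfold u in *. lra.
    + exists 2%nat, (m - 2)%Z. split; [lia|]. rewrite minus_IZR. simpl. unfold u in *. lra.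
Qed.

Lemma angle_exists x y : x * x + y * y = 1 ->
  exists d, 0 <= d <= 2 * PI /\ cos d = x /\ sin d = y.
Proof.
  intro H. assert (Hx : -1 <= x <= 1) by nra.
  pose proof (acos_bound x).
  destruct (Rle_or_lt 0 y) as [Hy|Hy].
  - exists (acos x). split; [lra|]. split; [apply cos_acos; auto|].
    rewrite sin_acos by auto. replace (1 - x²) with (y * y) by (unfold Rsqr; lra).
    apply sqrt_square; auto.
  - exists (2 * PI - acos x). split; [lra|]. split.
    + rewrite cos_minus, cos_2PI, sin_2PI, cos_acos by auto; ring.
    + rewrite sin_minus, cos_2PI, sin_2PI, sin_acos by auto.
      replace (1 - x²) with ((- y) * (- y)) by (unfold Rsqr; lra).
      rewrite sqrt_square by lra. ring.
Qed.

Lemma sin_sq_le w : -1 <= w <= 1 -> sin w * sin w <= w * w.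
Proof.
  intro Hw. pose proof PI_gt_3.
  assert (K : forall z, 0 <= z <= 1 -> sin z * sin z <= z * z).
  { intros z Hz. assert (0 <= sin z) by (apply sin_ge_0; lra).
    destruct (Req_dec z 0) as [->|Hz0]. rewrite sin_0; lra.
    assert (sin z < z) by (apply sin_lt_x; lra). nra. }
  destruct (Rle_or_lt 0 w).
  - apply K; lra.
  - replace (sin w * sin w) with (sin (-w) * sin (-w)) by (rewrite sin_neg; ring).
    replace (w * w) with ((-w) * (-w)) by ring. apply K; lra.
Qed.

Definition crs (u w : pt) : R := fst u * snd w - snd u * fst w.

Lemma step_alg (p u q : pt) (D : R) :
  dot p p = 1 -> dot u u = 1 -> dot q q = 1 -> 0 < D ->
  q = (fst p + D * fst u, snd p + D * snd u) ->
  D = -2 * dot p u /\ dot q (reflect_vel u q) = dot p u /\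
  crs q (reflect_vel u q) = crs p u.
Proof.
  destruct p as [px py], u as [ux uy], q as [qx qy].
  unfold dot, crs, reflect_vel; simpl.
  intros Hp Hu Hq HD E. injection E as E1 E2.
  assert (HD2 : D = -2 * (px * ux + py * uy)).
  { assert (H : D * (D + 2 * (px * ux + py * uy)) = 0).
    { subst qx qy. transitivity ((px + D*ux)*(px + D*ux) + (py + D*uy)*(py+D*uy) - 1
        + D * D * (1 - (ux*ux+uy*uy)) - (px*px+py*py - 1)); [ring|]. rewrite Hq, Hu, Hp. ring. }
    apply Rmult_integral in H as [H|H]; lra. }
  split; [exact HD2|]. split.
  - set (d := ux * qx + uy * qy).
    transitivity (d - 2 * d * (qx * qx + qy * qy)); [unfold d, dot; simpl; ring|]. rewrite Hq.
    assert (Ed : d = px * ux + py * uy + D * (ux * ux + uy * uy)) by (unfold d; subst; ring).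
    rewrite Hu in Ed. rewrite Ed, HD2. ring.
  - subst. ring.
Qed.

Lemma decomp (px py ux uy c s : R) : px * px + py * py = 1 ->
  c = px * ux + py * uy -> s = px * uy - py * ux ->
  ux = c * px - s * py /\ uy = c * py + s * px.
Proof.
  intros Hp Hc Hs. subst. split.
  - transitivity (ux * (px * px + py * py)); [rewrite Hp; ring | ring].
  - transitivity (uy * (px * px + py * py)); [rewrite Hp; ring | ring].
Qed.

Lemma billiard_struct x : billiard_ray x ->
  exists phi d L tau0, 0 < d < 2 * PI /\ L = 2 * sin (d / 2) /\ tau0 < 0 /\
   forall n : nat, x (tau0 + INR n * L) = (cos (phi + INR n * d), sin (phi + INR n * d)).
Proof.
  intros (tau & vel & Hinc & Hup & Hdown & Hin & Hbd & Hvel & Hseg & Hrefl).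
  destruct (Hdown 0) as [k0 Hk0].
  assert (Hstep : forall k,
    tau (k + 1)%Z - tau k = -2 * dot (x (tau k)) (vel k) /\
    dot (x (tau (k + 1)%Z)) (vel (k + 1)%Z) = dot (x (tau k)) (vel k) /\
    crs (x (tau (k + 1)%Z)) (vel (k + 1)%Z) = crs (x (tau k)) (vel k) /\
    x (tau (k + 1)%Z) = (fst (x (tau k)) + (tau (k + 1)%Z - tau k) * fst (vel k),
                         snd (x (tau k)) + (tau (k + 1)%Z - tau k) * snd (vel k))).
  { intro k. pose proof (Hinc k) as Hi.
    assert (Hs : x (tau (k + 1)%Z) = (fst (x (tau k)) + (tau (k + 1)%Z - tau k) * fst (vel k),
                         snd (x (tau k)) + (tau (k + 1)%Z - tau k) * snd (vel k))).
    { apply Hseg. lra. }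
    rewrite Hrefl.
    destruct (step_alg (x (tau k)) (vel k) (x (tau (k + 1)%Z)) (tau (k + 1)%Z - tau k))
      as (A & B & C); auto; lra. }
  set (K := fun n : nat => (k0 + Z.of_nat n)%Z).
  assert (KS : forall n, K (S n) = (K n + 1)%Z) by (intro n; unfold K; lia).
  assert (K0 : K 0%nat = k0) by (unfold K; lia).
  set (c := dot (x (tau k0)) (vel k0)).
  set (s := crs (x (tau k0)) (vel k0)).
  assert (Hcs : forall n, dot (x (tau (K n))) (vel (K n)) = c /\ crs (x (tau (K n))) (vel (K n)) = s).
  { induction n as [|n IH].
    - rewrite K0. auto.
    - rewrite KS. destruct (Hstep (K n)) as (_ & B & C & _). rewrite B, C. exact IH. }
  set (L := -2 * c).
  assert (HL : 0 < L).
  { pose proof (Hinc k0) as Hi. destruct (Hstep k0) as (A & _). unfold L, c. lra. }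
  assert (Htau : forall n, tau (K n) = tau k0 + INR n * L).
  { induction n as [|n IH].
    - rewrite K0. simpl. ring.
    - rewrite KS, S_INR. destruct (Hstep (K n)) as (A & _). destruct (Hcs n) as [Hc _].
      rewrite Hc in A.
      replace (tau k0 + (INR n + 1) * L) with ((tau k0 + INR n * L) + L) by ring.
      rewrite <- IH. unfold L. lra. }
  assert (Hcs1 : c * c + s * s = 1).
  { pose proof (Hbd k0) as Hp. pose proof (Hvel k0) as Hu.
    unfold c, s. destruct (x (tau k0)) as [px py], (vel k0) as [ux uy].
    unfold dot, crs in *; simpl in *.
    transitivity ((px * px + py * py) * (ux * ux + uy * uy)); [ring|]. rewrite Hp, Hu. ring. }
  destruct (angle_exists (1 + L * c) (L * s)) as (d & Hd & Hcd & Hsd).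
  { unfold L. transitivity (1 - 4 * c * c * (1 - (c * c + s * s))); [ring|]. rewrite Hcs1. ring. }
  destruct (angle_exists (fst (x (tau k0))) (snd (x (tau k0)))) as (phi & _ & Hcp & Hsp).
  { exact (Hbd k0). }
  assert (Hc0 : c < 0) by (unfold L in HL; lra).
  assert (Hd' : 0 < d < 2 * PI).
  { assert (cos d < 1) by (rewrite Hcd; unfold L; nra).
    destruct Hd as [Hd1 Hd2]. split.
    - destruct Hd1 as [Hd1|Hd1]; auto. subst d. rewrite cos_0 in *. lra.
    - destruct Hd2 as [Hd2|Hd2]; auto. rewrite Hd2 in *. rewrite cos_2PI in *. lra. }
  exists phi, d, L, (tau k0).
  split; [exact Hd'|]. split.
  { assert (Hsin : 0 < sin (d / 2)) by (apply sin_gt_0; lra).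
    assert (Hc2 : cos d = 1 - 2 * sin (d / 2) * sin (d / 2)).
    { rewrite <- cos_2a_sin. f_equal. field. }
    rewrite Hcd in Hc2. unfold L in Hc2.
    assert (Hsq : (sin (d / 2) + c) * (sin (d / 2) - c) = 0) by nra.
    apply Rmult_integral in Hsq as [Hq|Hq]; unfold L; lra. }
  split; [exact Hk0|].
  intro n. rewrite <- Htau.
  induction n as [|n IH].
  - rewrite K0. simpl. rewrite Rmult_0_l, Rplus_0_r, Hcp, Hsp. destruct (x (tau k0)); reflexivity.
  - rewrite KS. destruct (Hstep (K n)) as (_ & _ & _ & E). rewrite E.
    destruct (Hcs n) as [Hc Hs].
    rewrite Htau in E.
    assert (Hst : tau (K n + 1)%Z - tau (K n) = L).
    { rewrite <- KS, !Htau, S_INR. ring. }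
    rewrite Hst. rewrite IH. rewrite S_INR.
    pose proof (Hbd (K n)) as Hp. rewrite IH in Hp. unfold dot in Hp; simpl in Hp.
    destruct (vel (K n)) as [ux uy] eqn:EV. simpl.
    rewrite IH in Hc, Hs. unfold dot, crs in Hc, Hs; simpl in Hc, Hs.
    destruct (decomp _ _ ux uy c s Hp (eq_sym Hc) (eq_sym Hs)) as [Eu1 Eu2].
    replace (phi + (INR n + 1) * d) with ((phi + INR n * d) + d) by ring.
    set (A := phi + INR n * d) in *.
    rewrite (cos_plus A d), (sin_plus A d), Hcd, Hsd, Eu1, Eu2. f_equal; ring.
Qed.

Lemma theta0_pre v t0 t : t < t0 -> theta0 v t0 t = 0.
Proof. intro H. unfold theta0. destruct (Rlt_dec t t0); [reflexivity|contradiction]. Qed.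

Lemma theta0_post v t0 t : t0 <= t -> theta0 v t0 t = v * (t - t0).
Proof. intro H. unfold theta0. destruct (Rlt_dec t t0); [lra|reflexivity]. Qed.

Lemma hit_lemma eps a t0 v (T t : R) (x : R -> pt) ang (m : Z) :
  0 < eps -> 0 < t < T -> x t = (cos ang, sin ang) ->
  0 < ang - theta0 v t0 t + 2 * PI * IZR m < a ->
  exists t', 0 < t' < T /\ Qset eps a t0 v t' (x t').
Proof.
  intros He Ht Hx Hm. exists t. split; [exact Ht|]. split; [lra|].
  exists 1, (ang + 2 * PI * IZR m). split; [lra|]. split; [lra|].
  destruct (cos_sin_Z ang m) as [C S]. rewrite Hx, C, S, !Rmult_1_l. reflexivity.
Qed.

Lemma time_index tau0 L y : 0 < L -> tau0 <= y ->
  exists n : nat, y < tau0 + INR n * L <= y + L.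
Proof.
  intros HL Hy. set (q := (y - tau0) / L).
  assert (Hq : 0 <= q) by (unfold q; apply Rmult_le_pos; [lra| left; apply Rinv_0_lt_compat; lra]).
  destruct (archimed q) as [H1 H2].
  assert (Hup : (0 < up q)%Z) by (apply lt_IZR; simpl; lra).
  exists (Z.to_nat (up q)). rewrite INR_to_nat by exact Hup.
  assert (E : y - tau0 = q * L) by (unfold q; field; lra).
  set (U := IZR (up q)) in *.
  assert (A1 : U * L <= q * L + L) by nra.
  assert (A2 : q * L < U * L) by nra.
  split; lra.
Qed.

Theorem proposition3p3 (eps a t0 : R) :
  0 < eps < 1 -> 4 * PI / 5 < a < PI -> 2 * PI < t0 ->
  exists v, 0 < v < 1 /\ T0_finite (Qset eps a t0 v).
Proof.
  intros [He1 He2] [Ha1 Ha2] Ht0.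
  pose proof PI_lt_35 as Hpi35. pose proof PI_gt_3 as Hpi3.
  exists (1/2). split; [lra|].
  exists (t0 + 400). split; [lra|].
  intros x [Hb | Hg].
  - destruct (billiard_struct x Hb) as (phi & d & L & tau0 & Hd & HL & Htau0 & Hx).
    assert (Hs : 0 < sin (d/2)) by (apply sin_gt_0; lra).
    assert (HLpos : 0 < L) by lra.
    assert (HL2 : L <= 2) by (pose proof (SIN_bound (d/2)); lra).
    assert (HLd : L < d) by (pose proof (sin_lt_x (d/2)); lra).
    assert (HLd2 : L < 2*PI - d).
    { assert (E : sin (PI - d/2) = sin (d/2)) by (rewrite sin_PI_x; reflexivity).
      assert (sin (PI - d/2) < PI - d/2) by (apply sin_lt_x; lra). lra. }
    set (g := d - 1/2 * L).
    assert (Hgdef : g = d - 1/2 * L) by reflexivity.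
    clearbody g.
    destruct (time_index tau0 L t0 HLpos) as [n1 Hn1]; [lra|].
    set (psi0 := phi + INR n1 * d - 1/2 * (tau0 + INR n1 * L - t0)).
    assert (Post : forall (j : nat) (m : Z), INR j * L <= 390 ->
        0 < psi0 + INR j * g + 2 * PI * IZR m < a ->
        exists t', 0 < t' < t0 + 400 /\ Qset eps a t0 (1/2) t' (x t')).
    { intros j m Hj Hm.
      assert (Hj0 : 0 <= INR j * L) by (apply Rmult_le_pos; [apply pos_INR|lra]).
      apply (hit_lemma eps a t0 (1/2) (t0+400) (tau0 + INR (n1 + j) * L) x
               (phi + INR (n1 + j) * d) m); [lra| | apply Hx |].
      - rewrite plus_INR. lra.
      - rewrite theta0_post by (rewrite plus_INR; lra). rewrite plus_INR.
        unfold psi0 in Hm. rewrite Hgdef in Hm. lra. }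
    destruct (Rlt_dec g a) as [C1|C1].
    { destruct (walk_pos a psi0 g) as (j & m & Hj & Hm); [split; lra|].
      apply (Post j m); [|exact Hm].
      assert (INR j * L <= INR j * (2 * g)) by (apply Rmult_le_compat_l; [apply pos_INR|lra]).
      lra. }
    destruct (Rlt_dec (2*PI - a) g) as [C2|C2].
    { destruct (walk_neg a psi0 (g - 2*PI)) as (j & m & Hj & Hm); [split; lra|].
      apply (Post j (m - Z.of_nat j)%Z).
      - assert (INR j * L <= INR j * (- (g - 2*PI))) by (apply Rmult_le_compat_l; [apply pos_INR|lra]).
        lra.
      - rewrite minus_IZR, <- INR_IZR_INZ. lra. }
    destruct (Rle_dec g (PI - 1/10)) as [C3|C3].
    { destruct (walk_neg a psi0 (2*g - 2*PI)) as (i & m & Hi & Hm); [split; lra|].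
      assert (E2 : INR (2 * i) = 2 * INR i) by (rewrite mult_INR; simpl; ring).
      apply (Post (2 * i)%nat (m - Z.of_nat i)%Z).
      - rewrite E2.
        assert (INR i * (1/5) <= INR i * (- (2*g - 2*PI))) by (apply Rmult_le_compat_l; [apply pos_INR|lra]).
        assert (INR i * L <= INR i * 2) by (apply Rmult_le_compat_l; [apply pos_INR|lra]).
        lra.
      - rewrite E2, minus_IZR, <- INR_IZR_INZ. lra. }
    destruct (Rle_dec (PI + 1/10) g) as [C4|C4].
    { destruct (walk_pos a psi0 (2*g - 2*PI)) as (i & m & Hi & Hm); [split; lra|].
      assert (E2 : INR (2 * i) = 2 * INR i) by (rewrite mult_INR; simpl; ring).
      apply (Post (2 * i)%nat (m - Z.of_nat i)%Z).
      - rewrite E2.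
        assert (INR i * (1/5) <= INR i * (2*g - 2*PI)) by (apply Rmult_le_compat_l; [apply pos_INR|lra]).
        assert (INR i * L <= INR i * 2) by (apply Rmult_le_compat_l; [apply pos_INR|lra]).
        lra.
      - rewrite E2, minus_IZR, <- INR_IZR_INZ. lra. }
    (* near-period-2 case: use the static phase before t0 *)
    assert (Hg : PI - 1/10 < g < PI + 1/10) by lra.
    assert (Hdr : 2*PI - a < d < PI + a/2).
    { assert (Hdu : d < PI + 11/10) by lra.
      split; [|lra].
      set (z := PI/2 - d/2).
      assert (Hz : -(55/100) < z < 1/20) by (unfold z; lra).
      assert (Esz : sin (d/2) = cos z).
      { unfold z. rewrite <- sin_shift. f_equal. ring. }
      assert (Ecz : cos z = 1 - 2 * sin (z/2) * sin (z/2)).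
      { rewrite <- cos_2a_sin. f_equal. field. }
      assert (Hsq : sin (z/2) * sin (z/2) <= (z/2) * (z/2)) by (apply sin_sq_le; lra).
      assert (Hz2 : z * z <= 3025/10000) by nra.
      lra. }
    destruct (time_index tau0 L 0 HLpos) as [n0 Hn0]; [lra|].
    destruct (three_pt a (phi + INR n0 * d) d) as (i & m & Hi & Hm); [lra|lra|exact Hdr|].
    assert (Hi2 : INR i <= 2) by (apply (le_INR i 2) in Hi; simpl in Hi; lra).
    assert (HiL : 0 <= INR i * L <= 2 * L).
    { split; [apply Rmult_le_pos; [apply pos_INR|lra]|].
      apply Rmult_le_compat_r; lra. }
    apply (hit_lemma eps a t0 (1/2) (t0+400) (tau0 + INR (n0 + i) * L) x
             (phi + INR (n0 + i) * d) m); [lra| | apply Hx |].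
    + rewrite plus_INR. lra.
    + rewrite theta0_pre by (rewrite plus_INR; lra). rewrite plus_INR. lra.
  - destruct Hg as (th1 & s & Hs & Hx).
    destruct Hs as [-> | ->].
    + destruct (pos_rep (a/2 - th1)) as [m Hm].
      apply (hit_lemma eps a t0 (1/2) (t0+400) (a/2 - th1 + 2*PI*IZR m) x
               (th1 + 1 * (a/2 - th1 + 2*PI*IZR m)) (-m)); [lra|lra|apply Hx|].
      rewrite theta0_pre by lra. rewrite opp_IZR. lra.
    + destruct (pos_rep (th1 - a/2)) as [m Hm].
      apply (hit_lemma eps a t0 (1/2) (t0+400) (th1 - a/2 + 2*PI*IZR m) x
               (th1 + -1 * (th1 - a/2 + 2*PI*IZR m)) m); [lra|lra|apply Hx|].
      rewrite theta0_pre by lra. lra.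
Qed.
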